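(* Let $n_t\ge 1$. The product $\prod_{i=1}^{n_t} C^2X_{t_i}$ of $n_t$ Toffoli gates that share the same two control qubits $c_1,c_2$ and have pairwise distinct target qubits $t_1,\dots,t_{n_t}$ (all distinct from the controls) can be implemented exactly, without auxiliary qubits, by a circuit of single-qubit gates and $2n_t+4$ CNOT gates.
   Context: $C^2X_{t}$ denotes the Toffoli gate: it flips target qubit $t$ if and only if both control qubits are in state $|1\rangle$. *)

(* Defs.v *)
From mathcomp Require Import all_boot all_algebra.
From mathcomp Require Import complex.
From mathcomp Require Import Rstruct.
Set Implicit Arguments. Unset Strict Implicit. Unset Printing Implicit Defensive.
Import GRing.Theory Num.Theory.
Local Open Scope ring_scope.

Definition C : numClosedFieldType := complex Rdefinitions.R.

(* An m-qubit register: computational basis states are indexed by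
   i : 'I_(2^m); qubit q of basis state i is bit q of the binary expansion of i. *)
Definition qbit (m : nat) (q : 'I_m) (i : 'I_(2 ^ m)) : bool := odd (i %/ 2 ^ q).

Definition bit_ord (b : bool) : 'I_2 := inord (nat_of_bool b).

Definition unitary2 (U : 'M[C]_2) : Prop := U *m (map_mx Num.conj U)^T = 1%:M.

Definition single_mx (m : nat) (q : 'I_m) (U : 'M[C]_2) : 'M[C]_(2 ^ m) :=
  \matrix_(i, j)
    (if [forall p : 'I_m, (p != q) ==> (qbit p i == qbit p j)]
     then U (bit_ord (qbit q i)) (bit_ord (qbit q j)) else 0).

Definition cnot_mx (m : nat) (c t : 'I_m) : 'M[C]_(2 ^ m) :=
  \matrix_(i, j)
    ([forall p : 'I_m,
        qbit p i == (if p == t then qbit t j (+) qbit c j else qbit p j)] %:R).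

Definition toffoli_mx (m : nat) (c1 c2 t : 'I_m) : 'M[C]_(2 ^ m) :=
  \matrix_(i, j)
    ([forall p : 'I_m,
        qbit p i == (if p == t then qbit t j (+) (qbit c1 j && qbit c2 j)
                     else qbit p j)] %:R).

Inductive gate (m : nat) : Type :=
  | G1 of 'I_m & 'M[C]_2
  | GCX of 'I_m & 'I_m.        (* CNOT with control c, target t *)

Definition gate_ok (m : nat) (g : gate m) : Prop :=
  match g with
  | G1 _ U => unitary2 U
  | GCX c t => c != t
  end.

Definition gate_qubits (m : nat) (g : gate m) : seq 'I_m :=
  match g with
  | G1 q _ => [:: q]
  | GCX c t => [:: c; t]
  end.

Definition gate_mx (m : nat) (g : gate m) : 'M[C]_(2 ^ m) :=
  match g with
  | G1 q U => single_mx q U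
  | GCX c t => cnot_mx c t
  end.

Definition is_cnot (m : nat) (g : gate m) : bool :=
  if g is GCX _ _ then true else false.

(* A circuit is a list of gates applied left to right: the first gate of the
   list acts first, so circuit_mx [:: g1; ...; gk] = gk *m ... *m g1. *)
Fixpoint circuit_mx (m : nat) (gs : seq (gate m)) : 'M[C]_(2 ^ m) :=
  match gs with
  | [::] => 1%:M
  | g :: gs' => circuit_mx gs' *m gate_mx g
  end.

Definition cnot_count (m : nat) (gs : seq (gate m)) : nat := count (@is_cnot m) gs.

Definition multi_toffoli_mx (m : nat) (c1 c2 : 'I_m) (ts : seq 'I_m) : 'M[C]_(2 ^ m) :=
  foldr (fun t M => toffoli_mx c1 c2 t *m M) 1%:M ts.

(* Main.v *)
Require Import Defs.
From mathcomp Require Import all_boot all_algebra.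
From mathcomp Require Import complex.
From Stdlib Require Import FunctionalExtensionality.
From mathcomp Require Import ring zify.
Set Implicit Arguments. Unset Strict Implicit. Unset Printing Implicit Defensive.
Import GRing.Theory Num.Theory.

Lemma digits_inj (m i j : nat) : (i < 2 ^ m)%N -> (j < 2 ^ m)%N ->
  (forall p, (p < m)%N -> odd (i %/ 2 ^ p) = odd (j %/ 2 ^ p)) -> i = j.
Proof.
elim: m i j => [|m IH] i j.
  by rewrite expn0 !ltnS !leqn0 => /eqP -> /eqP ->.
move=> hi hj H.
have h0 : odd i = odd j by have := H 0%N isT; rewrite expn0 !divn1.
have e : i %/ 2 = j %/ 2.
  apply: IH.
  - by rewrite ltn_divLR // -expnSr.
  - by rewrite ltn_divLR // -expnSr.
  move=> p hp; rewrite -!divnMA -expnS; exact: H.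
by rewrite (divn_eq i 2) (divn_eq j 2) !modn2 h0 e.
Qed.

Definition bits (m : nat) (i : 'I_(2 ^ m)) : {ffun 'I_m -> bool} :=
  [ffun p => qbit p i].

Lemma bits_inj (m : nat) : injective (@bits m).
Proof.
move=> i j /ffunP H; apply: val_inj; apply: (digits_inj (ltn_ord i) (ltn_ord j)).
move=> p hp; have := H (Ordinal hp); rewrite !ffunE /qbit //.
Qed.

Lemma bits_bij (m : nat) : bijective (@bits m).
Proof.
apply: inj_card_bij; first exact: bits_inj.
by rewrite card_ffun card_bool !card_ord.
Qed.

Lemma pow2_gt0 (m : nat) : (0 < 2 ^ m)%N.
Proof. by rewrite expn_gt0. Qed.

Definition i0 (m : nat) : 'I_(2 ^ m) := Ordinal (pow2_gt0 m).

Definition idx (m : nat) (f : {ffun 'I_m -> bool}) : 'I_(2 ^ m) :=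
  odflt (i0 m) [pick k | bits k == f].

Lemma bitsK (m : nat) (f : {ffun 'I_m -> bool}) : bits (idx f) = f.
Proof.
rewrite /idx; case: pickP => [k /eqP //|H].
case: (bits_bij m) => g _ gK.
by have := H (g f); rewrite gK eqxx.
Qed.

Local Open Scope ring_scope.

Lemma qbit_idx (m : nat) (f : {ffun 'I_m -> bool}) p : qbit p (idx f) = f p.
Proof. by rewrite -{2}(bitsK f) ffunE. Qed.

Lemma qbit_inj (m : nat) (i j : 'I_(2 ^ m)) :
  (forall p, qbit p i = qbit p j) -> i = j.
Proof. by move=> H; apply: bits_inj; apply/ffunP => p; rewrite !ffunE. Qed.

Lemma forall_qbit (m : nat) (i j : 'I_(2 ^ m)) :
  [forall p, qbit p i == qbit p j] = (i == j).
Proof.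
apply/forallP/eqP => [H|->] //; apply: qbit_inj => p; exact/eqP.
Qed.

Definition upd (m : nat) (i : 'I_(2 ^ m)) (q : 'I_m) (b : bool) : 'I_(2 ^ m) :=
  idx [ffun p => if p == q then b else qbit p i].

Lemma qbit_upd m (i : 'I_(2 ^ m)) q b p :
  qbit p (upd i q b) = if p == q then b else qbit p i.
Proof. by rewrite qbit_idx ffunE. Qed.

Lemma upd_id m (i : 'I_(2 ^ m)) q : upd i q (qbit q i) = i.
Proof. by apply: qbit_inj => p; rewrite qbit_upd; case: eqP => [->|]. Qed.

Lemma upd_upd m (i : 'I_(2 ^ m)) q b b' : upd (upd i q b) q b' = upd i q b'.
Proof. by apply: qbit_inj => p; rewrite !qbit_upd; case: eqP. Qed.

Lemma upd_comm m (i : 'I_(2 ^ m)) q s b b' : q != s ->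
  upd (upd i q b) s b' = upd (upd i s b') q b.
Proof.
move=> nqs; apply: qbit_inj => p; rewrite !qbit_upd.
case: (eqVneq p s) => [->|//]; by rewrite eq_sym (negbTE nqs).
Qed.

Lemma upd_ne m (i : 'I_(2 ^ m)) q : upd i q true != upd i q false.
Proof.
apply/eqP => /(congr1 (qbit q)); by rewrite !qbit_upd eqxx.
Qed.

Definition cnotp (m : nat) (c t : 'I_m) (i : 'I_(2 ^ m)) : 'I_(2 ^ m) :=
  idx [ffun p => if p == t then qbit t i (+) qbit c i else qbit p i].

Lemma qbit_cnotp m (c t : 'I_m) i p :
  qbit p (cnotp c t i) = if p == t then qbit t i (+) qbit c i else qbit p i.
Proof. by rewrite qbit_idx ffunE. Qed.

Lemma cnotpK m (c t : 'I_m) i : c != t -> cnotp c t (cnotp c t i) = i.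
Proof.
move=> nct; apply: qbit_inj => p; rewrite !qbit_cnotp eqxx (negbTE nct).
case: eqP => [->|//]; by rewrite -addbA addbb addbF.
Qed.

Lemma cnotp_comm m (a b t : 'I_m) i : a != t -> b != t ->
  cnotp a t (cnotp b t i) = cnotp b t (cnotp a t i).
Proof.
move=> nat nbt; apply: qbit_inj => p.
rewrite !qbit_cnotp eqxx (negbTE nat) (negbTE nbt).
case: eqP => // _; by rewrite -!addbA [qbit a i (+) _]addbC.
Qed.

Definition toffp (m : nat) (c1 c2 t : 'I_m) (i : 'I_(2 ^ m)) : 'I_(2 ^ m) :=
  idx [ffun p => if p == t then qbit t i (+) (qbit c1 i && qbit c2 i) else qbit p i].

Lemma qbit_toffp m (c1 c2 t : 'I_m) i p :
  qbit p (toffp c1 c2 t i) =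
  if p == t then qbit t i (+) (qbit c1 i && qbit c2 i) else qbit p i.
Proof. by rewrite qbit_idx ffunE. Qed.

Lemma toffpK m (c1 c2 t : 'I_m) i : c1 != t -> c2 != t ->
  toffp c1 c2 t (toffp c1 c2 t i) = i.
Proof.
move=> n1 n2; apply: qbit_inj => p; rewrite !qbit_toffp eqxx (negbTE n1) (negbTE n2).
case: eqP => [->|//]; by rewrite -addbA addbb addbF.
Qed.

Lemma toffp_upd m (c1 c2 t : 'I_m) i : c1 != t -> c2 != t ->
  toffp c1 c2 t i = upd i t (qbit t i (+) (qbit c1 i && qbit c2 i)).
Proof.
by move=> n1 n2; apply: qbit_inj => p; rewrite [LHS]qbit_toffp [RHS]qbit_upd.
Qed.

Lemma mul_perm n (M : 'M[C]_n) (f : 'I_n -> 'I_n) :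
  (forall i k, M i k = (k == f i)%:R) ->
  forall (A : 'M[C]_n) i j, (M *m A) i j = A (f i) j.
Proof.
move=> HM A i j; rewrite mxE (bigD1 (f i)) // HM eqxx mul1r.
rewrite big1 ?Monoid.simpm //.
by move=> k /negbTE nk; rewrite HM nk mul0r.
Qed.

Lemma cnot_entry m (c t : 'I_m) i k : c != t ->
  cnot_mx c t i k = (k == cnotp c t i)%:R.
Proof.
move=> nct; rewrite mxE.
have -> : [forall p, qbit p i == (if p == t then qbit t k (+) qbit c k else qbit p k)]
  = [forall p, qbit p i == qbit p (cnotp c t k)].
  by apply: eq_forallb => p; rewrite qbit_cnotp.
rewrite forall_qbit; congr (_%:R); congr (nat_of_bool _).
by apply/idP/idP => /eqP ->; rewrite cnotpK.
Qed.

Lemma toff_entry m (c1 c2 t : 'I_m) i k : c1 != t -> c2 != t ->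
  toffoli_mx c1 c2 t i k = (k == toffp c1 c2 t i)%:R.
Proof.
move=> n1 n2; rewrite mxE.
have -> : [forall p, qbit p i == (if p == t then qbit t k (+) (qbit c1 k && qbit c2 k) else qbit p k)]
  = [forall p, qbit p i == qbit p (toffp c1 c2 t k)].
  by apply: eq_forallb => p; rewrite qbit_toffp.
rewrite forall_qbit; congr (_%:R); congr (nat_of_bool _).
by apply/idP/idP => /eqP ->; rewrite toffpK.
Qed.

Notation bo := bit_ord.

Lemma single_mul m (q : 'I_m) (U : 'M[C]_2) (A : 'M[C]_(2 ^ m)) i j :
  (single_mx q U *m A) i j =
  U (bo (qbit q i)) (bo false) * A (upd i q false) j +
  U (bo (qbit q i)) (bo true) * A (upd i q true) j.
Proof.
rewrite mxE (bigD1 (upd i q false)) // (bigD1 (upd i q true)); last exact: upd_ne.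
have Hc b : [forall p, (p != q) ==> (qbit p i == qbit p (upd i q b))].
  by apply/forallP => p; apply/implyP => /negbTE npq; rewrite qbit_upd npq.
rewrite !mxE !Hc !qbit_upd !eqxx big1; first by rewrite Monoid.mulm1.
move=> k /andP [nk1 nk0]; rewrite mxE.
case: ifP => [/forallP H|_]; last by rewrite mul0r.
have ek : k = upd i q (qbit q k).
  apply: qbit_inj => p; rewrite qbit_upd; case: eqP => [->//|/eqP npq].
  by have := implyP (H p) npq => /eqP.
by move: nk1 nk0; rewrite ek; case: (qbit q k); rewrite eqxx.
Qed.

Definition opU m (q : 'I_m) (U : 'M[C]_2) (v : 'I_(2 ^ m) -> C) : 'I_(2 ^ m) -> C :=
  fun i => U (bo (qbit q i)) (bo false) * v (upd i q false) +
           U (bo (qbit q i)) (bo true) * v (upd i q true).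
Definition opP m (f : 'I_(2 ^ m) -> 'I_(2 ^ m)) (v : 'I_(2 ^ m) -> C) : 'I_(2 ^ m) -> C :=
  fun i => v (f i).
Definition opD m (d : 'I_(2 ^ m) -> C) (v : 'I_(2 ^ m) -> C) : 'I_(2 ^ m) -> C :=
  fun i => d i * v i.
Definition opg m (g : gate m) :=
  match g with G1 q U => opU q U | GCX c t => opP (cnotp c t) end.
Fixpoint sem m (gs : seq (gate m)) (v : 'I_(2 ^ m) -> C) : 'I_(2 ^ m) -> C :=
  match gs with [::] => v | g :: gs' => sem gs' (opg g v) end.

Lemma gate_sem m (g : gate m) (A : 'M[C]_(2 ^ m)) : gate_ok g ->
  gate_mx g *m A = \matrix_(i, j) opg g (fun k => A k j) i.
Proof.
case: g => [q U|c t] /= ok; apply/matrixP => i j; rewrite [RHS]mxE.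
  by rewrite single_mul.
by rewrite (mul_perm (f := cnotp c t)) // => i' k; rewrite cnot_entry.
Qed.

Lemma circ_sem m (gs : seq (gate m)) (A : 'M[C]_(2 ^ m)) :
  (forall g, List.In g gs -> gate_ok g) ->
  circuit_mx gs *m A = \matrix_(i, j) sem gs (fun k => A k j) i.
Proof.
elim: gs A => [|g gs IH] A H /=.
  by rewrite mul1mx; apply/matrixP => i j; rewrite mxE.
rewrite -mulmxA IH; last by move=> g' hg'; apply: H; right.
apply/matrixP => i j; rewrite !mxE; congr (sem _ _ i).
apply: functional_extensionality => k.
by rewrite gate_sem ?mxE //; apply: H; left.
Qed.

Lemma sem_cat m (a b : seq (gate m)) v : sem (a ++ b) v = sem b (sem a v).
Proof. by elim: a v => [|g a IH] v //=. Qed.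

Definition semT m (c1 c2 : 'I_m) (ts : seq 'I_m) (v : 'I_(2 ^ m) -> C) :=
  foldr (fun t w => opP (toffp c1 c2 t) w) v ts.

Lemma multi_sem m (c1 c2 : 'I_m) ts (A : 'M[C]_(2 ^ m)) :
  (forall t, t \in ts -> (c1 != t) && (c2 != t)) ->
  multi_toffoli_mx c1 c2 ts *m A = \matrix_(i, j) semT c1 c2 ts (fun k => A k j) i.
Proof.
elim: ts => [|t ts IH] H /=.
  by rewrite mul1mx; apply/matrixP => i j; rewrite mxE.
have /andP [n1 n2] := H t (mem_head _ _).
rewrite -mulmxA IH; last by move=> t' ht'; apply: H; rewrite in_cons ht' orbT.
apply/matrixP => i j; rewrite [RHS]mxE.
rewrite (mul_perm (f := toffp c1 c2 t)); last by move=> i' k; rewrite toff_entry.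
by rewrite mxE.
Qed.

Lemma mx_of_sem m (c1 c2 : 'I_m) ts (gs : seq (gate m)) :
  (forall g, List.In g gs -> gate_ok g) ->
  (forall t, t \in ts -> (c1 != t) && (c2 != t)) ->
  (forall v, sem gs v = semT c1 c2 ts v) ->
  circuit_mx gs = multi_toffoli_mx c1 c2 ts.
Proof.
move=> Hg Ht Hs.
rewrite -(mulmx1 (circuit_mx gs)) -(mulmx1 (multi_toffoli_mx c1 c2 ts)).
by rewrite circ_sem // multi_sem // ; apply/matrixP => i j; rewrite !mxE Hs.
Qed.

Lemma opU_comm m (q s : 'I_m) U V (v : 'I_(2 ^ m) -> C) : q != s ->
  opU q U (opU s V v) = opU s V (opU q U v).
Proof.
move=> nqs; apply: functional_extensionality => i; rewrite /opU.
have nsq : (s == q) = false by rewrite eq_sym (negbTE nqs).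
rewrite !qbit_upd (negbTE nqs) nsq !(upd_comm _ _ _ nqs).
ring.
Qed.

Lemma opD_opU m (d : 'I_(2 ^ m) -> C) s V v :
  (forall i b, d (upd i s b) = d i) ->
  opD d (opU s V v) = opU s V (opD d v).
Proof.
move=> Hd; apply: functional_extensionality => i; rewrite /opU /opD !Hd.
ring.
Qed.

Lemma opD_opD m (d1 d2 : 'I_(2 ^ m) -> C) v :
  opD d1 (opD d2 v) = opD (fun i => d1 i * d2 i) v.
Proof. by apply: functional_extensionality => i; rewrite /opD mulrA. Qed.

Lemma bo_val b : val (bo b) = b.
Proof. by case: b; apply: inordK. Qed.

Definition Ph (z : C) : 'M[C]_2 :=
  \matrix_(a, b) (if a == b then (if val a == 1%N then z else 1) else 0).

Lemma Ph_entry z x y : Ph z (bo x) (bo y) = if x == y then (if x then z else 1) else 0.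
Proof.
rewrite mxE -val_eqE !bo_val.
by case: x; case: y.
Qed.

Lemma eqTF : (true == false) = false. Proof. by []. Qed.
Lemma eqFT : (false == true) = false. Proof. by []. Qed.

Lemma opU_Ph m (q : 'I_m) z :
  opU q (Ph z) = opD (fun i => if qbit q i then z else 1).
Proof.
apply: functional_extensionality => v; apply: functional_extensionality => i.
rewrite /opU /opD !Ph_entry.
case E: (qbit q i); rewrite ?eqxx ?eqTF ?eqFT.
  have e : upd i q true = i by rewrite -E upd_id.
  by rewrite e mul0r add0r.
have e : upd i q false = i by rewrite -E upd_id.
by rewrite e mul0r addr0.
Qed.

Definition h : C := sqrtC (2^-1).
Lemma hh : h * h = 2^-1.
Proof. by rewrite -expr2 sqrtCK. Qed.
Lemma h_conj : h^* = h.
Proof. apply: conj_Creal; apply: sqrtC_real; by rewrite invr_ge0 ler0n. Qed.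

Definition Hm : 'M[C]_2 :=
  \matrix_(a, b) (if (val a == 1%N) && (val b == 1%N) then - h else h).

Lemma Hm_entry x y : Hm (bo x) (bo y) = if x && y then - h else h.
Proof. by rewrite mxE !bo_val; case: x; case: y. Qed.

Lemma two_ne0 : (2 : C) != 0.
Proof. by rewrite pnatr_eq0. Qed.

Lemma hN_conj : (- h)^* = - h.
Proof. by rewrite rmorphN /= h_conj. Qed.

Lemma half_half : (2^-1 + 2^-1 : C) = 1.
Proof. by field. Qed.

Lemma Hm_unitary : unitary2 Hm.
Proof.
rewrite /unitary2; apply/matrixP => a b; rewrite !mxE !big_ord_recl big_ord0 !mxE.
case: a => [[|[|a]] Ha] //; case: b => [[|[|b]] Hb] //; rewrite /= ?hN_conj ?h_conj.
all: by rewrite ?mulrN ?mulNr ?opprK hh ?addr0 ?subrr ?addNr ?half_half.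
Qed.

Definition w : C := sqrtC (sqrtC (-1)).
Lemma w4 : w ^+ 4 = -1.
Proof. by rewrite (exprM w 2 2) sqrtCK sqrtCK. Qed.
Lemma w8 : w ^+ 8 = 1.
Proof. by rewrite (exprM w 4 2) w4 expr2 mulN1r opprK. Qed.
Lemma wmod n : w ^+ n = w ^+ (n %% 8).
Proof.
by rewrite {1}(divn_eq n 8) exprD mulnC exprM w8 expr1n mul1r.
Qed.
Lemma ww : w * w^* = 1.
Proof.
rewrite -normCK; apply/eqP; rewrite -sqrp_eq1.
  by rewrite -exprM -normrX w4 normrN normr1.
by rewrite exprn_ge0.
Qed.
Lemma wk_conj k : w ^+ k * (w ^+ k)^* = 1.
Proof. by rewrite rmorphXn /= -exprMn ww expr1n. Qed.

Lemma Ph_unitary z : z * z^* = 1 -> unitary2 (Ph z).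
Proof.
move=> Hz; rewrite /unitary2; apply/matrixP => a b; rewrite !mxE !big_ord_recl big_ord0 !mxE.
case: a => [[|[|a]] Ha] //; case: b => [[|[|b]] Hb] //; rewrite /= ?rmorph0 ?rmorph1.
all: by rewrite ?Hz ?mul0r ?mulr0 ?mul1r ?addr0 ?add0r.
Qed.

Definition sgn (b : bool) : C := if b then -1 else 1.
Definition ccz m (c1 c2 t : 'I_m) (i : 'I_(2 ^ m)) : C :=
  sgn (qbit c1 i && qbit c2 i && qbit t i).

Lemma hmul x : h * (h * x) = 2^-1 * x.
Proof. by rewrite mulrA hh. Qed.

Lemma toff_H m (c1 c2 t : 'I_m) v : c1 != t -> c2 != t ->
  opP (toffp c1 c2 t) v = opU t Hm (opD (ccz c1 c2 t) (opU t Hm v)).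
Proof.
move=> n1 n2; apply: functional_extensionality => i.
have e1 : (c1 == t) = false by apply/negbTE.
have e2 : (c2 == t) = false by apply/negbTE.
rewrite /opP /opU /opD /ccz toffp_upd // !qbit_upd e1 e2 eqxx !upd_upd !Hm_entry.
case: (qbit c1 i); case: (qbit c2 i); case: (qbit t i); rewrite /sgn; cbn [andb addb negb].
all: rewrite !(mulrDr, mulNr, mulrN, mul1r, mulN1r, hmul).
all: by field.
Qed.

Definition Hs m (ts : seq 'I_m) : seq (gate m) := map (fun t => G1 t Hm) ts.

Lemma sem_Hs_cons m (t : 'I_m) ts v : sem (Hs (t :: ts)) v = sem (Hs ts) (opU t Hm v).
Proof. by []. Qed.

Lemma semT_cons m (c1 c2 t : 'I_m) ts v :
  semT c1 c2 (t :: ts) v = opP (toffp c1 c2 t) (semT c1 c2 ts v).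
Proof. by []. Qed.

Lemma W_opU m (ts : seq 'I_m) t U v : t \notin ts ->
  opU t U (sem (Hs ts) v) = sem (Hs ts) (opU t U v).
Proof.
elim: ts v => [|s ts IH] v // ; rewrite in_cons negb_or => /andP [nts nt].
by rewrite !sem_Hs_cons IH // opU_comm.
Qed.

Lemma W_opD m (ts : seq 'I_m) d v :
  (forall s, s \in ts -> forall i b, d (upd i s b) = d i) ->
  opD d (sem (Hs ts) v) = sem (Hs ts) (opD d v).
Proof.
elim: ts v => [|s ts IH] v H //.
rewrite !sem_Hs_cons IH; last by move=> s' hs'; apply: H; rewrite in_cons hs' orbT.
by rewrite opD_opU //; apply: H; rewrite mem_head.
Qed.

Definition par m (ts : seq 'I_m) (i : 'I_(2 ^ m)) : bool :=
  foldr (fun t b => qbit t i (+) b) false ts.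

Definition Dp m (c1 c2 : 'I_m) ts (i : 'I_(2 ^ m)) : C :=
  sgn (qbit c1 i && qbit c2 i && par ts i).

Lemma par_upd m (ts : seq 'I_m) s i b : s \notin ts -> par ts (upd i s b) = par ts i.
Proof.
elim: ts => [|t ts IH] //; rewrite in_cons negb_or => /andP [nst nts].
rewrite /par /= -/(par ts (upd i s b)) -/(par ts i) IH // qbit_upd.
by rewrite eq_sym (negbTE nst).
Qed.

Lemma Dp_upd m (c1 c2 : 'I_m) ts s i b : s \notin ts -> c1 != s -> c2 != s ->
  Dp c1 c2 ts (upd i s b) = Dp c1 c2 ts i.
Proof.
by move=> nts n1 n2; rewrite /Dp par_upd // !qbit_upd (negbTE n1) (negbTE n2).
Qed.

Lemma ccz_upd m (c1 c2 t : 'I_m) s i b : t != s -> c1 != s -> c2 != s ->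
  ccz c1 c2 t (upd i s b) = ccz c1 c2 t i.
Proof.
by move=> nt n1 n2; rewrite /ccz !qbit_upd (negbTE n1) (negbTE n2) (negbTE nt).
Qed.

Lemma Dp_cons m (c1 c2 t : 'I_m) ts i :
  Dp c1 c2 (t :: ts) i = ccz c1 c2 t i * Dp c1 c2 ts i.
Proof.
rewrite /Dp /ccz /par; cbn [foldr]; rewrite -/(par ts i).
case: (qbit c1 i); case: (qbit c2 i); case: (qbit t i); case: (par ts i);
  rewrite /sgn; cbn [andb addb negb].
all: by rewrite ?mulrNN ?mul1r ?mulr1.
Qed.

Lemma semT_W m (c1 c2 : 'I_m) ts v : uniq ts -> c1 \notin ts -> c2 \notin ts ->
  semT c1 c2 ts v = sem (Hs ts) (opD (Dp c1 c2 ts) (sem (Hs ts) v)).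
Proof.
elim: ts v => [|t ts IH] v.
  move=> _ _ _; apply: functional_extensionality => i.
  rewrite /opD /Dp /par; cbn [sem Hs map semT foldr].
  by rewrite andbF /sgn mul1r.
rewrite cons_uniq !in_cons !negb_or => /andP [nt u] /andP [n1 n1s] /andP [n2 n2s].
have Hinv : forall s, s \in ts -> forall i b, ccz c1 c2 t (upd i s b) = ccz c1 c2 t i.
  move=> s hs i b; apply: ccz_upd.
  - by apply: contraNneq nt => ->.
  - by apply: contraNneq n1s => ->.
  - by apply: contraNneq n2s => ->.
rewrite semT_cons IH // toff_H // !sem_Hs_cons.
rewrite (W_opU _ _ nt).
rewrite -(@opD_opU _ (Dp c1 c2 ts)); last by move=> i b; apply: Dp_upd; rewrite // eq_sym.
rewrite (W_opU _ _ nt) (W_opD _ Hinv) (W_opU _ _ nt) opD_opD.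
congr (sem _ (opU _ _ (opD _ _))).
by apply: functional_extensionality => i; rewrite Dp_cons.
Qed.

Lemma In_map_ex (A B : Type) (f : A -> B) (s : seq A) (y : B) :
  List.In y (map f s) -> exists x, List.In x s /\ y = f x.
Proof.
elim: s => [|x s IH] //= [<-|/IH [x' [hx' ->]]]; first by exists x; split; [left|].
by exists x'; split; [right|].
Qed.

Lemma In_mem (T : eqType) (x : T) (s : seq T) : List.In x s -> x \in s.
Proof. elim: s => [|y s IH] //= [->|/IH h]; rewrite in_cons ?eqxx ?h ?orbT //. Qed.

Definition Ps m (t0 : 'I_m) (rest : seq 'I_m) : seq (gate m) :=
  map (fun s => GCX s t0) rest.

Definition pi m (t0 : 'I_m) (rest : seq 'I_m) (i : 'I_(2 ^ m)) : 'I_(2 ^ m) :=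
  foldr (fun s k => cnotp s t0 k) i rest.

Lemma sem_Ps m (t0 : 'I_m) rest v : sem (Ps t0 rest) v = fun i => v (pi t0 rest i).
Proof.
by elim: rest v => [|s rest IH] v //=; rewrite IH.
Qed.

Lemma qbit_pi m (t0 : 'I_m) rest i p : t0 \notin rest ->
  qbit p (pi t0 rest i) = if p == t0 then qbit t0 i (+) par rest i else qbit p i.
Proof.
elim: rest p => [|s rest IH] p; first by rewrite /pi /par /=; case: eqP => // ->; rewrite addbF.
rewrite in_cons negb_or => /andP [nts nr].
rewrite /pi /par; cbn [foldr]; rewrite -/(pi t0 rest i) -/(par rest i).
rewrite qbit_cnotp !IH // eqxx.
case: (p == t0) => //.
have -> : (s == t0) = false by rewrite eq_sym; apply/negbTE.
by rewrite [qbit s i (+) _]addbC addbA.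
Qed.

Lemma par_pi m (t0 : 'I_m) rest rest' i : t0 \notin rest -> t0 \notin rest' ->
  par rest' (pi t0 rest i) = par rest' i.
Proof.
move=> nr; elim: rest' => [|s r IH] //; rewrite in_cons negb_or => /andP [nts nr'].
rewrite /par; cbn [foldr]; rewrite -!/(par r _) IH // qbit_pi //.
by have -> : (s == t0) = false by rewrite eq_sym; apply/negbTE.
Qed.

Lemma pi_inv m (t0 : 'I_m) rest i : t0 \notin rest -> pi t0 rest (pi t0 rest i) = i.
Proof.
move=> nr; apply: qbit_inj => p; rewrite !qbit_pi // eqxx par_pi //.
by case: eqP => // ->; rewrite -addbA addbb addbF.
Qed.

Definition CCZc m (c1 c2 t0 : 'I_m) : seq (gate m) :=
  [:: G1 c1 (Ph (w ^+ 1)); G1 c2 (Ph (w ^+ 1)); G1 t0 (Ph (w ^+ 1)); GCX c2 t0;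
      G1 t0 (Ph (w ^+ 7)); GCX c1 t0; G1 t0 (Ph (w ^+ 1)); GCX c2 t0;
      G1 t0 (Ph (w ^+ 7)); GCX c1 t0; GCX c1 c2; G1 c2 (Ph (w ^+ 7)); GCX c1 c2].

Lemma sem_CCZ m (c1 c2 t0 : 'I_m) v : c1 != c2 -> c1 != t0 -> c2 != t0 ->
  sem (CCZc c1 c2 t0) v = opD (ccz c1 c2 t0) v.
Proof.
move=> n12 n1 n2; cbn [sem opg CCZc]; rewrite !opU_Ph.
apply: functional_extensionality => i; rewrite /opD /opP.
have e1t : (c1 == t0) = false by apply/negbTE.
have e2t : (c2 == t0) = false by apply/negbTE.
have et1 : (t0 == c1) = false by rewrite eq_sym.
have et2 : (t0 == c2) = false by rewrite eq_sym.
have e12 : (c1 == c2) = false by apply/negbTE.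
have e21 : (c2 == c1) = false by rewrite eq_sym.
rewrite (cnotpK _ n12).
rewrite [cnotp c1 t0 (cnotp c2 t0 _)]cnotp_comm // cnotpK // cnotpK //.
rewrite !qbit_cnotp !eqxx ?e1t ?e2t ?et1 ?et2 ?e12 ?e21; cbn [addb negb andb].
rewrite /ccz !mulrA.
case: (qbit c1 i); case: (qbit c2 i); case: (qbit t0 i); cbn [addb negb andb].
all: congr (_ * _); rewrite /sgn ?mulr1 ?mul1r -?exprD //.
all: rewrite wmod; first [exact: w4 | exact: (expr0 w)].
Qed.

Lemma mid m (c1 c2 t0 : 'I_m) rest x : c1 != c2 -> c1 != t0 -> c2 != t0 -> t0 \notin rest ->
  sem (Ps t0 rest) (sem (CCZc c1 c2 t0) (sem (Ps t0 rest) x)) = opD (Dp c1 c2 (t0 :: rest)) x.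
Proof.
move=> n12 n1 n2 nr; rewrite sem_CCZ // !sem_Ps.
apply: functional_extensionality => i; rewrite /opD pi_inv //.
rewrite /ccz /Dp !qbit_pi // (negbTE n1) (negbTE n2) eqxx.
by rewrite /par; cbn [foldr].
Qed.

Lemma cnt_Hs m (ts : seq 'I_m) : cnot_count (Hs ts) = 0%N.
Proof. by elim: ts. Qed.

Lemma cnt_Ps m (t0 : 'I_m) rest : cnot_count (Ps t0 rest) = size rest.
Proof. by elim: rest => //= s r ->. Qed.

Lemma CCZ_ok m (c1 c2 t0 : 'I_m) g : c1 != c2 -> c1 != t0 -> c2 != t0 ->
  List.In g (CCZc c1 c2 t0) ->
  gate_ok g /\ {subset gate_qubits g <= [:: c1; c2; t0]}.
Proof.
move=> n12 n1 n2 /= H.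
do 13 (case: H => [<-|H]; first (split; [
  first [apply: Ph_unitary; apply: wk_conj | done]
| apply/allP; by rewrite /= !inE !eqxx ?orbT])).
done.
Qed.

Lemma In_cat (A : Type) (a b : seq A) (x : A) :
  List.In x (a ++ b) -> List.In x a \/ List.In x b.
Proof. exact: (proj1 (List.in_app_iff a b x)). Qed.
Arguments In_cat {A a b x} _.

Unset Implicit Arguments.

Theorem lemma5 (m : nat) (c1 c2 : 'I_m) (ts : seq 'I_m) :
  (1 <= size ts)%N ->
  c1 != c2 ->
  uniq ts ->
  c1 \notin ts -> c2 \notin ts ->
  exists gs : seq (gate m),
    [/\ (forall g, List.In g gs ->
            gate_ok g /\ {subset gate_qubits g <= c1 :: c2 :: ts}),
        cnot_count gs = (2 * size ts + 4)%N
      & circuit_mx gs = multi_toffoli_mx c1 c2 ts].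
Proof.
case: ts => [|t0 rest] // _ n12 u n1s n2s.
move: (u) (n1s) (n2s); rewrite cons_uniq !in_cons !negb_or => /andP [nr ur] /andP [n1 n1r] /andP [n2 n2r].
set gs := Hs (t0 :: rest) ++ (Ps t0 rest ++ (CCZc c1 c2 t0 ++ (Ps t0 rest ++ Hs (t0 :: rest)))).
have memts : forall t, List.In t (t0 :: rest) -> t \in c1 :: c2 :: t0 :: rest.
  by move=> t /In_mem h; rewrite in_cons in_cons h !orbT.
have memr : forall t, List.In t rest -> t \in c1 :: c2 :: t0 :: rest.
  by move=> t /In_mem h; rewrite in_cons in_cons in_cons h !orbT.
have HHs : forall g, List.In g (Hs (t0 :: rest)) ->
    gate_ok g /\ {subset gate_qubits g <= c1 :: c2 :: t0 :: rest}.
  move=> g hg; have [t [ht ->]] := In_map_ex hg; split; first exact: Hm_unitary.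
  by move=> x; rewrite inE => /eqP ->; apply: memts.
have HPs : forall g, List.In g (Ps t0 rest) ->
    gate_ok g /\ {subset gate_qubits g <= c1 :: c2 :: t0 :: rest}.
  move=> g hg; have [s [hs ->]] := In_map_ex hg; split.
    by rewrite /=; apply: contraNneq nr => <-; apply: In_mem.
  move=> x; rewrite /= !inE => /orP [/eqP ->|/eqP ->]; last by rewrite eqxx !orbT.
  by have := In_mem hs => ->; rewrite !orbT.
have Hg : forall g, List.In g gs ->
    gate_ok g /\ {subset gate_qubits g <= c1 :: c2 :: t0 :: rest}.
  move=> g; rewrite /gs => /In_cat [|/In_cat [|/In_cat [|/In_cat [|]]]]; try by [apply: HHs | apply: HPs].
  move=> hin; have [ok sub] := CCZ_ok n12 n1 n2 hin; split => // x /sub.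
  by rewrite !inE => /orP [->|/orP [->|->]]; rewrite ?orbT.
exists gs; split => //.
  rewrite /gs /cnot_count !count_cat -!/(cnot_count _) cnt_Hs cnt_Ps /=.
  lia.
apply: mx_of_sem.
- by move=> g /Hg [].
- move=> t ht; apply/andP; split.
    by apply: contraNneq n1s => ->.
  by apply: contraNneq n2s => ->.
move=> v; rewrite /gs !sem_cat mid //.
by rewrite semT_W.
Qed.
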